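(* (i) For every $\gamma > 1$ there exists a deviation FRLP instance such that $$\gamma \cdot \max_{x \in \bar{X}} \sum_{q \in Q} v^{\mathrm{agg}}_q(x) \le \max_{x \in \bar{X}} \sum_{q \in Q} v^{\mathrm{disagg}}_q(x).$$ (ii) For every $\gamma > 1$ there exists a deviation FRLP instance such that $$\gamma \cdot \max_{x \in \bar{X}} \sum_{q \in Q} v^{\mathrm{tight}}_q(x) \le \max_{x \in \bar{X}} \sum_{q \in Q} v^{\mathrm{agg}}_q(x).$$
   Context: A deviation FRLP instance consists of: a finite undirected graph $G=(N,A)$ with edge lengths $\ell_e>0$; a travel range $d>0$ with $\ell_e \le d$ for every edge; a finite set $Q$ of demands, each $q \in Q$ with a flow volume $f_q \ge 0$ and a finite nonempty set $R_q$ of paths; and a polytope $\bar{X} \subseteq [0,1]^{|N|}$ (the LP relaxation of the set of feasible station placements). A path is a sequence $r=(v_0,\dots,v_m)$, $m\ge 1$, of nodes with consecutive nodes joined by an edge (nodes may repeat). For $x \in \{0,1\}^N$ ($x_j=1$ meaning a charging station at node $j$), $r$ is repeatedly traversable under $x$ if, letting $W=(v_0,\dots,v_m,v_{m-1},\dots,v_0)$ be the round trip along $r$, at least one node of $r$ has $x_j=1$ and, in the infinite periodic repetition of $W$, the distance travelled between any two consecutive visits to nodes with a station is at most $d$. For each $q$ and $r \in R_q$, $\mathcal{D}_{q,r}\subseteq 2^N$ is a family of node sets such that for every $x \in \{0,1\}^N$: $r$ is repeatedly traversable under $x$ iff $\sum_{j\in S} x_j \ge 1$ for all $S \in \mathcal{D}_{q,r}$.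 Let $\mathcal{C}_q = \{ \bigcup_{r \in R_q} S_r : S_r \in \mathcal{D}_{q,r} \text{ for each } r\}$. For $x \in [0,1]^{|N|}$: $v^{\mathrm{disagg}}_q(x) = \max\{ \sum_{r \in R_q} f_q z_r : z \in [0,1]^{|R_q|},\ \sum_{r} z_r \le 1,\ \sum_{j \in S} x_j \ge z_r \ \forall r \in R_q, S \in \mathcal{D}_{q,r}\}$; $v^{\mathrm{agg}}_q(x) = \max\{ f_q y : y \in [0,1],\ \sum_{j \in S} x_j \ge y \ \forall S \in \mathcal{C}_q\}$; $K_q$ is the set of concave functions $v$ on $[0,1]^{|N|}$ agreeing with $v^{\mathrm{agg}}_q$ on $\{0,1\}^{|N|}$, and $v^{\mathrm{tight}}_q(x) = \inf_{v \in K_q} v(x)$. *)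

(* Defs.v *)
From HB Require Import structures.
From mathcomp Require Import all_boot all_order all_algebra.
From mathcomp Require Import boolp classical_sets reals.
Unset Printing Implicit Defensive.
Import Order.TTheory GRing.Theory Num.Theory.
Local Open Scope classical_set_scope.
Local Open Scope ring_scope.

Section Deviation.
Variable R : realType.

(* Paths are node sequences; R_q is the (duplicate-free) list [paths q];
   D q r is the family D_{q,r}; the polytope is {x in [0,1]^N | A x <= b}. *)
Record instance := Instance {
  n : nat;
  adj : rel 'I_n;
  len : 'I_n -> 'I_n -> R;
  rng : R;
  nQ : nat;
  flow : 'I_nQ -> R;
  paths : 'I_nQ -> seq (seq 'I_n);
  D : 'I_nQ -> seq 'I_n -> {set {set 'I_n}};
  mcon : nat;
  A : 'I_mcon -> 'I_n -> R;
  b : 'I_mcon -> R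
}.

Variable I : instance.

Definition cube (x : 'I_(n I) -> R) := forall j, 0 <= x j <= 1.
Definition binary (x : 'I_(n I) -> R) := forall j, x j = 0 \/ x j = 1.

Definition is_path (r : seq 'I_(n I)) : bool :=
  if r is v0 :: s then (0 < size s)%N && path (adj I) v0 s else false.

(* one period of the infinite repetition of the round trip
   W = (v_0,...,v_m,v_{m-1},...,v_0): (v_0,...,v_m,v_{m-1},...,v_1) *)
Definition roundtrip (r : seq 'I_(n I)) : seq 'I_(n I) :=
  r ++ take (size r - 2) (behead (rev r)).

Definition walk (v0 : 'I_(n I)) (r : seq 'I_(n I)) (k : nat) : 'I_(n I) :=
  nth v0 (roundtrip r) (k %% size (roundtrip r)).

Definition rep_traversable (r : seq 'I_(n I)) (x : 'I_(n I) -> R) : Prop :=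
  match r with
  | [::] => False
  | v0 :: _ =>
    (exists j, j \in r /\ x j = 1) /\
    forall k k' : nat, (k < k')%N ->
      x (walk v0 r k) = 1 -> x (walk v0 r k') = 1 ->
      (forall i, (k < i < k')%N -> x (walk v0 r i) <> 1) ->
      \sum_(k <= i < k') len I (walk v0 r i) (walk v0 r i.+1) <= rng I
  end.

Definition Xbar (x : 'I_(n I) -> R) : Prop :=
  cube x /\ forall i, \sum_j A I i j * x j <= b I i.

Definition deviation_instance : Prop :=
  (forall u v, adj I u v = adj I v u) /\
  (forall u, ~~ adj I u u) /\
  (forall u v, adj I u v -> [/\ len I u v = len I v u, 0 < len I u v & len I u v <= rng I]) /\
  0 < rng I /\
  (forall q, 0 <= flow I q) /\
  (forall q, [/\ paths I q != [::], uniq (paths I q) & all is_path (paths I q)]) /\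
  (forall q r, r \in paths I q -> forall x, binary x ->
      (rep_traversable r x <-> forall S, S \in D I q r -> 1 <= \sum_(j in S) x j)) /\
  (exists x, Xbar x).

Definition v_disagg (q : 'I_(nQ I)) (x : 'I_(n I) -> R) : R :=
  sup [set \sum_(r <- paths I q) flow I q * z r | z in
       [set z : seq 'I_(n I) -> R |
          (forall r, r \in paths I q -> 0 <= z r <= 1) /\
          \sum_(r <- paths I q) z r <= 1 /\
          (forall r S, r \in paths I q -> S \in D I q r -> z r <= \sum_(j in S) x j)]].

Definition inC (q : 'I_(nQ I)) (S : {set 'I_(n I)}) : Prop :=
  exists g : seq 'I_(n I) -> {set 'I_(n I)},
    (forall r, r \in paths I q -> g r \in D I q r) /\
    S = \bigcup_(r <- paths I q) g r.

Definition v_agg (q : 'I_(nQ I)) (x : 'I_(n I) -> R) : R :=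
  sup [set flow I q * y | y in
       [set y : R | 0 <= y <= 1 /\ forall S, inC q S -> y <= \sum_(j in S) x j]].

Definition concave_on_cube (v : ('I_(n I) -> R) -> R) : Prop :=
  forall x y, cube x -> cube y -> forall t : R, 0 <= t <= 1 ->
    t * v x + (1 - t) * v y <= v (fun j => t * x j + (1 - t) * y j).

Definition K (q : 'I_(nQ I)) : set (('I_(n I) -> R) -> R) :=
  [set v | concave_on_cube v /\ forall x, binary x -> v x = v_agg q x].

Definition v_tight (q : 'I_(nQ I)) (x : 'I_(n I) -> R) : R :=
  inf [set v x | v in K q].

Definition obj (v : 'I_(nQ I) -> ('I_(n I) -> R) -> R) : set R :=
  [set \sum_q v q x | x in Xbar].

End Deviation.

Definition is_max {R : realType} (E : set R) (m : R) : Prop :=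
  E m /\ forall y, E y -> y <= m.

(* Main.v *)
Require Import Defs.
From mathcomp Require Import all_boot all_order all_algebra.
From mathcomp Require Import boolp classical_sets reals.
From mathcomp Require Import zify ring lra.
Import Order.TTheory GRing.Theory Num.Theory.
Local Open Scope ring_scope.

Section Aux.
Variable R : realType.

Definition mkI (m : nat) (Ps : seq {set 'I_m}) (th : R) : instance R :=
  @Instance R m (fun u v => u != v) (fun _ _ => 1) 1 1 (fun _ => 1)
    (fun _ => map (fun P : {set 'I_m} => enum P) Ps) (fun _ r => [set [set j] | j in r])
    (m + m)
    (fun i j => match split i with inl k => (k == j)%:R | inr k => - (k == j)%:R end)
    (fun i => match split i with inl _ => th | inr _ => - th end).

Section RT.
Variable T : eqType.
Lemma rt_mem (r : seq T) j : j \in r ++ take (size r - 2) (behead (rev r)) -> j \in r.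
Proof.
rewrite mem_cat => /orP[//|/mem_take]; case: (rev r) (mem_rev r) => [|a s] //= Hr Hj.
by rewrite -Hr inE Hj orbT.
Qed.
End RT.

Variables (m : nat) (Ps : seq {set 'I_m}) (th : R).
Let I := mkI m Ps th.

Lemma walk_mem (v0 : 'I_m) r k : (0 < size r)%N -> @walk R I v0 r k \in r.
Proof.
move=> hr; rewrite /walk /roundtrip; apply: rt_mem; apply: mem_nth.
by rewrite ltn_pmod // size_cat (leq_trans hr) // leq_addr.
Qed.

Lemma walk_index (v0 : 'I_m) r j : j \in r -> @walk R I v0 r (index j r) = j.
Proof.
move=> hj; rewrite /walk /roundtrip size_cat modn_small; last first.
  by apply: (leq_trans _ (leq_addr _ _)); rewrite index_mem.
by rewrite nth_cat index_mem hj nth_index.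
Qed.

Lemma walk_per (v0 : 'I_m) r k : @walk R I v0 r (k + size (roundtrip R I r)) = @walk R I v0 r k.
Proof. by rewrite /walk modnDr. Qed.

Lemma size_rt (r : seq 'I_m) : (size r <= size (roundtrip R I r))%N.
Proof. by rewrite /roundtrip size_cat leq_addr. Qed.


Lemma trav_iff (r : seq 'I_m) (x : 'I_m -> R) : (1 < size r)%N ->
  rep_traversable R I r x <-> (forall j, j \in r -> x j = 1).
Proof.
case: r => [//|v0 s] hs; set r := v0 :: s.
have hr : (0 < size r)%N by [].
have sumE : forall k k', \sum_(k <= i < k') len R I (walk R I v0 r i) (walk R I v0 r i.+1)
   = (k' - k)%:R by move=> k k'; rewrite sumr_const_nat.
rewrite /rep_traversable; split.
- move=> [[j0 [j0r xj0]] H] j jr; apply/eqP; apply: contraT => xj.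
  set P := size (roundtrip R I r).
  have rP := size_rt r.
  set p := (index j r + P)%N.
  have stE : forall i, x (walk R I v0 r i) = 1 <-> (x (walk R I v0 r i) == 1) by move=> i; split => [->|/eqP].
  have exk : exists i, (i < p)%N && (x (walk R I v0 r i) == 1).
    exists (index j0 r); rewrite walk_index // xj0 eqxx andbT.
    by rewrite /p (leq_trans _ (leq_addl _ _)) // (leq_trans _ rP) // index_mem.
  have exk' : exists i, (p < i)%N && (x (walk R I v0 r i) == 1).
    exists (index j0 r + P + P)%N; rewrite !walk_per walk_index // xj0 eqxx andbT.
    have : (index j r < size r)%N by rewrite index_mem.
    rewrite /p; lia.
  have ub : forall i, (i < p)%N && (x (walk R I v0 r i) == 1) -> (i <= p)%N.
    by move=> i /andP[/ltnW].
  case: (ex_maxnP exk ub) => k /andP[kp stk] kmax.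
  case: (ex_minnP exk') => k' /andP[pk' stk'] kmin.
  have := H k k' (ltn_trans kp pk') (eqP stk) (eqP stk').
  rewrite sumE /= => Hs.
  have {}Hs : (forall i, (k < i < k')%N -> x (walk R I v0 r i) <> 1) -> (k' - k <= 1)%N.
    by move=> h; rewrite -(ler_nat R); apply: Hs h.
  suff : (k' - k <= 1)%N by lia.
  apply: Hs => i /andP[ki ik'] xi.
  case: (ltngtP i p) => [ip|pi|ip].
  + by have := kmax i; rewrite ip xi eqxx => /(_ isT); lia.
  + by have := kmin i; rewrite pi xi eqxx => /(_ isT); lia.
  + by move: xi; rewrite ip /p walk_per walk_index // => /eqP; rewrite (negbTE xj).
- move=> H; split; first by exists v0; split; [rewrite inE eqxx|apply: H; rewrite inE eqxx].
  move=> k k' kk' _ _ Hb; rewrite sumE /=.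
  suff hh : (k' - k <= 1)%N by rewrite -(ler_nat R) in hh.
  case: (leqP (k' - k) 1) => // hk; exfalso.
  apply: (Hb k.+1); first by apply/andP; split; lia.
  by apply: H; apply: walk_mem.
Qed.


Lemma path_neq (v0 : 'I_m) s : uniq (v0 :: s) -> path (fun u v : 'I_m => u != v) v0 s.
Proof.
elim: s v0 => [//|a s IH] v0 /= /andP[]; rewrite inE negb_or => /andP[va _] us.
by rewrite va /=; apply: IH.
Qed.

Hypotheses (Psn : Ps != [::]) (Psu : uniq Ps) (Ps2 : forall P, P \in Ps -> (1 < #|P|)%N)
  (th0 : 0 <= th) (th1 : th <= 1).

Lemma Xbar_const : Xbar R I (fun _ => th).
Proof.
split; first by move=> j; rewrite th0 th1.
move=> i /=; case: (split i) => k.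
- rewrite (eq_bigr (fun j => if j == k then th else 0)); last first.
    move=> j _; rewrite eq_sym; case: eqP => _; rewrite /= ?mulr1n ?mulr0n; [by rewrite mul1r | by rewrite mul0r].
  by rewrite -big_mkcond big_pred1_eq.
- rewrite (eq_bigr (fun j => if j == k then - th else 0)); last first.
    move=> j _; rewrite eq_sym; case: eqP => _; [by rewrite mulr1n mulN1r | by rewrite mulr0n oppr0 mul0r].
  by rewrite -big_mkcond big_pred1_eq.
Qed.

Lemma Xbar_eq x : Xbar R I x -> x = (fun _ => th).
Proof.
move=> [_ H]; apply: funext => j.
have sE : forall (c : R) (k : 'I_m), \sum_(j0 < m) c * (k == j0)%:R * x j0 = c * x k.
  move=> c k; rewrite (bigD1 k) //= eqxx mulr1 big1 ?addr0 // => i ik.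
  by rewrite eq_sym (negbTE ik) mulr0 mul0r.
have h1 := H (lshift m j); have h2 := H (rshift m j).
have e1 : split (lshift m j) = inl j := unsplitK (inl j).
have e2 : split (rshift m j) = inr j := unsplitK (inr j).
move: h1 h2 => /=; rewrite e1 e2.
under eq_bigr do rewrite -[_%:R]mul1r.
rewrite sE mul1r => h1.
under eq_bigr do rewrite -mulN1r.
rewrite sE mulN1r lerN2 => h2.
by apply/eqP; rewrite eq_le h1 h2.
Qed.


Lemma paths_mem r : r \in paths R I ord0 -> exists2 P, P \in Ps & r = enum P.
Proof. by move=> /mapP[P PP ->]; exists P. Qed.

Lemma D_iff (r : seq 'I_m) (x : 'I_m -> R) : binary R I x ->
  (forall S, S \in D R I ord0 r -> 1 <= \sum_(j in S) x j) <-> (forall j, j \in r -> x j = 1).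
Proof.
move=> bx; split.
- move=> H j jr; have := H [set j] (imset_f _ jr); rewrite big_set1.
  by case: (bx j) => ->; rewrite ?ler10.
- move=> H S /imsetP[j jr ->]; by rewrite big_set1 H.
Qed.

Lemma dev : deviation_instance R I.
Proof.
split; first by move=> u v; rewrite /= eq_sym.
split; first by move=> u; rewrite /= eqxx.
split; first by move=> u v _; rewrite /= ltr01 lexx.
split; first exact: ltr01.
split; first by move=> q; exact: ler01.
split.
  move=> q; split => /=.
  - by case: (Ps) Psn.
  - rewrite map_inj_in_uniq // => P Q _ _ e.
    by rewrite -(set_enum P) -(set_enum Q) e.
  - apply/allP => r /mapP[P PP ->].
    have := Ps2 P PP; rewrite cardE.
    case: (enum P) (enum_uniq P) => [//|v0 s] u hs /=; rewrite (_ : (0 < size s)%N) //=.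
    exact: path_neq.
split; last by exists (fun _ => th); exact: Xbar_const.
move=> q r; rewrite (ord1 q) => /mapP[P PP ->] x bx.
rewrite D_iff // trav_iff //.
by have := Ps2 P PP; rewrite cardE.
Qed.

Lemma mem_bigcupS (F : seq 'I_m -> {set 'I_m}) rs x :
  x \in \bigcup_(r <- rs) F r <-> exists2 r, r \in rs & x \in F r.
Proof.
elim: rs => [|r rs IH]; first by rewrite big_nil inE; split => // [[]].
rewrite big_cons finset.in_setU; split.
- case/orP => [h|/IH [r' h1 h2]]; first by exists r; rewrite ?mem_head.
  by exists r'; rewrite // inE h1 orbT.
- case=> r'; rewrite inE => /orP[/eqP ->|h1] h2; first by rewrite h2.
  by apply/orP; right; apply/IH; exists r'.
Qed.

Lemma inC_hit S : inC R I ord0 S -> forall r, r \in paths R I ord0 -> exists2 j, j \in r & j \in S.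
Proof.
move=> [g [Hg ->]] r rp; have := Hg r rp => /imsetP[j jr e]; exists j => //.
by apply/mem_bigcupS; exists r => //; rewrite e set11.
Qed.

Lemma inC_mk (g : seq 'I_m -> 'I_m) : (forall r, r \in paths R I ord0 -> g r \in r) ->
  inC R I ord0 (\bigcup_(r <- paths R I ord0) [set g r]).
Proof. by move=> H; exists (fun r => [set g r]); split => // r rp; apply: imset_f; apply: H. Qed.

Lemma sum_ge_mem (x : 'I_m -> R) (S : {set 'I_m}) j : (forall i, 0 <= x i) -> j \in S ->
  x j <= \sum_(i in S) x i.
Proof. by move=> x0 jS; rewrite (bigD1 j) //= lerDl sumr_ge0. Qed.

Lemma is_max_const v : is_max (obj R I v) (\sum_q v q (fun _ => th)).
Proof.
split; first by exists (fun _ => th) => //; exact: Xbar_const.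
by move=> y [x /Xbar_eq -> <-].
Qed.

End Aux.
Arguments inC_mk {R m Ps th}.
Arguments inC_hit {R m Ps th}.
Arguments mem_bigcupS {m}.
Arguments sum_ge_mem {R m}.
Section Part1.
Variable R : realType.
Variable m : nat.
Hypothesis hm : (2 < m)%N.
Let th : R := (m%:R)^-1.
Let Ps1 : seq {set 'I_m} := [seq [set~ j] | j <- enum 'I_m].
Let I := mkI R m Ps1 th.
Let a : 'I_m := Ordinal (ltn_trans (isT : (0 < 2)%N) hm).
Let b : 'I_m := Ordinal (ltn_trans (isT : (1 < 2)%N) hm).

Lemma mgt0 : (0 : R) < m%:R. Proof. by rewrite ltr0n; lia. Qed.
Lemma th0 : 0 <= th. Proof. by rewrite invr_ge0 ltW // mgt0. Qed.
Lemma th1 : th <= 1. Proof. by rewrite invf_le1 ?mgt0 // ler1n; lia. Qed.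

Lemma Ps1_ne : Ps1 != [::].
Proof. by rewrite -size_eq0 size_map size_enum_ord; lia. Qed.

Lemma Ps1_uniq : uniq Ps1.
Proof.
rewrite map_inj_uniq ?enum_uniq // => u v e.
have := congr1 (fun A : {set 'I_m} => v \in A) e; rewrite !in_setC1 eqxx.
by move/negbFE/eqP.
Qed.

Lemma Ps1_card P : P \in Ps1 -> (1 < #|P|)%N.
Proof. by move=> /mapP[j _ ->]; rewrite cardsC1 card_ord; lia. Qed.

Lemma dev1 : deviation_instance R I.
Proof. apply: dev; [exact: Ps1_ne|exact: Ps1_uniq|exact: Ps1_card|exact: th0|exact: th1]. Qed.

Lemma agg1_le : v_agg R I ord0 (fun _ => th) <= 2 * th.
Proof.
apply: ge_sup.
  exists (1 * 0), 0 => //; split; first by rewrite lexx ler01.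
  by move=> S _; apply: sumr_ge0 => *; exact: th0.
move=> _ [y [y01 Hy] <-]; rewrite mul1r.
pose g (r : seq 'I_m) := if a \in r then a else b.
have gr : forall r, r \in paths R I ord0 -> g r \in r.
  move=> r /mapP[P /mapP[j _ ->] ->]; rewrite /g; case: ifP => // /negbT.
  rewrite !mem_enum !in_setC1 negbK => /eqP <-; apply/eqP => /(congr1 val) //.
move: (Hy _ (inC_mk _ gr)) => h; apply: (le_trans h).
rewrite sumr_const -[th *+ _]mulr_natl; apply: (ler_wpM2r th0).
rewrite ler_nat.
have sub : \bigcup_(r <- paths R I ord0) [set g r] \subset [set a; b].
  apply/fintype.subsetP => j /mem_bigcupS [r _]; rewrite inE => /eqP ->.
  by rewrite /g; case: ifP; rewrite !inE eqxx ?orbT.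
apply: leq_trans (subset_leq_card sub) _.
by rewrite cards2; case: (a != b).
Qed.

Lemma pathA : enum [set~ a] \in paths R I ord0.
Proof. by apply: map_f; apply: map_f; rewrite mem_enum. Qed.

Lemma agg1_ge : th <= v_agg R I ord0 (fun _ => th).
Proof.
have hub : has_ubound [set 1 * y | y in [set y : R | 0 <= y <= 1 /\
     forall S, inC R I ord0 S -> y <= \sum_(j in S) th]].
  by exists 1 => _ [y [/andP[_ y1] _] <-]; rewrite mul1r.
suff h : 1 * th <= v_agg R I ord0 (fun _ => th) by rewrite mul1r in h.
apply: (ub_le_sup hub); exists th => //; split.
  by rewrite th0 th1.
move=> S /inC_hit /(_ _ pathA) [j _ jS].
by apply: (sum_ge_mem (fun _ => th) S j) => // _; exact: th0.
Qed.

Lemma disagg1_ge : 1 <= v_disagg R I ord0 (fun _ => th).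
Proof.
have sumc : \sum_(r <- paths R I ord0) th = 1.
  rewrite /= !big_map -enumT big_enum /= sumr_const card_ord -mulr_natl mulfV //.
  by rewrite gt_eqF // mgt0.
rewrite /v_disagg.
set E := (X in _ <= sup X).
have hub : has_ubound E.
  exists 1 => _ [z [_ [zs _]] <-]; under eq_bigr do rewrite mul1r; exact: zs.
apply: (ub_le_sup hub).
- exists (fun _ => th); last by under eq_bigr do rewrite mul1r; rewrite sumc.
  split; first by move=> r _; rewrite th0 th1.
  split; first by rewrite sumc.
  by move=> r S _ /imsetP[j _ ->]; rewrite big_set1.
Qed.

End Part1.

Section Concave.
Variable R : realType.
Variable m : nat.

Definition cc (v : ('I_m -> R) -> R) := forall x y : 'I_m -> R, forall t : R, 0 <= t <= 1 ->
    t * v x + (1 - t) * v y <= v (fun j => t * x j + (1 - t) * y j).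

Lemma cc_min f g : cc f -> cc g -> cc (fun y => Order.min (f y) (g y)).
Proof.
move=> cf cg x y t /andP[t0 t1].
have t0' : 0 <= 1 - t by rewrite subr_ge0.
rewrite le_min; apply/andP; split.
- apply: le_trans (cf x y t _); last by rewrite t0 t1.
  by apply: lerD; apply: ler_wpM2l => //; rewrite ge_min lexx.
- apply: le_trans (cg x y t _); last by rewrite t0 t1.
  by apply: lerD; apply: ler_wpM2l => //; rewrite ge_min lexx orbT.
Qed.

Lemma sum_lin (T : pred 'I_m) (x y : 'I_m -> R) t :
  \sum_(j in T) (t * x j + (1 - t) * y j) = t * \sum_(j in T) x j + (1 - t) * \sum_(j in T) y j.
Proof. by rewrite big_split /= !mulr_sumr. Qed.

Lemma cc_bigmin (C : pred {set 'I_m}) :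
  cc (fun y => \big[Order.min/1]_(T : {set 'I_m} | C T) \sum_(j in T) y j).
Proof.
move=> x y t /andP[t0 t1].
have t0' : 0 <= 1 - t by rewrite subr_ge0.
apply: le_bigmin.
  apply: (@le_trans _ _ (t * 1 + (1 - t) * 1)).
    by apply: lerD; apply: ler_wpM2l => //; exact: bigmin_le_id.
  by rewrite !mulr1 addrC subrK.
move=> T CT; rewrite sum_lin; apply: lerD; apply: ler_wpM2l => //; exact: bigmin_le_cond.
Qed.

Lemma cc_lin (c : R) : cc (fun y => \sum_j y j * c).
Proof.
move=> x y t _; rewrite -!mulr_suml.
rewrite big_split /= -!mulr_sumr le_eqVlt; apply/orP; left; apply/eqP; ring.
Qed.

End Concave.

Section Part2.
Variable R : realType.
Variable s : nat.
Hypothesis hs : (1 < s)%N.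
Let m := (s + s)%N.
Let th : R := (m%:R)^-1.
Let Ps2 : seq {set 'I_m} := enum [set P : {set 'I_m} | (s <= #|P|)%N].
Let I := mkI R m Ps2 th.
Let j0 : 'I_m := Ordinal (leq_trans (ltnW hs) (leq_addr s s)).

Lemma mgt02 : (0 : R) < m%:R. Proof. by rewrite ltr0n /m; lia. Qed.
Lemma th02 : 0 <= th. Proof. by rewrite invr_ge0 ltW // mgt02. Qed.
Lemma th12 : th <= 1. Proof. by rewrite invf_le1 ?mgt02 // ler1n /m; lia. Qed.

Lemma pathP2 (P : {set 'I_m}) : (s <= #|P|)%N -> enum P \in paths R I ord0.
Proof. by move=> hP; apply: map_f; rewrite mem_enum inE. Qed.

Lemma paths2 r : r \in paths R I ord0 -> exists2 P : {set 'I_m}, (s <= #|P|)%N & r = enum P.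
Proof. by move=> /mapP[P]; rewrite mem_enum inE => hP ->; exists P. Qed.

Lemma dev2 : deviation_instance R I.
Proof.
apply: dev.
- apply/eqP => /(congr1 (fun l => [set: 'I_m] \in l)); rewrite mem_enum inE cardsT card_ord.
  by rewrite /m leq_addr.
- exact: enum_uniq.
- by move=> P; rewrite mem_enum inE; lia.
- exact: th02.
- exact: th12.
Qed.

Definition vv (y : 'I_m -> R) : R :=
  Order.min (\sum_j y j * (s%:R)^-1)
            (\big[Order.min/1]_(T : {set 'I_m} | (s < #|T|)%N) \sum_(j in T) y j).

Lemma sgt0 : (0 : R) < s%:R. Proof. by rewrite ltr0n; lia. Qed.

Section Bin.
Variable u : 'I_m -> R.
Hypothesis bu : binary R I u.
Let U := [set j | u j == 1].
Lemma ueq j : u j = if j \in U then 1 else 0.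
Proof. by rewrite inE; case: (bu j) => ->; rewrite ?eqxx // eq_sym oner_eq0. Qed.
Lemma u0 j : 0 <= u j. Proof. by rewrite ueq; case: ifP. Qed.

Lemma agg_bin : v_agg R I ord0 u = if (s <= #|U|)%N then 1 else 0.
Proof.
rewrite /v_agg; set E := (X in sup X = _).
have hub : ubound E 1 by move=> _ [y [/andP[_ y1] _] <-]; rewrite mul1r.
case: ifP => hU.
- have E1 : E 1.
    exists 1; last by rewrite mul1r.
    split; first by rewrite ler01 lexx.
    move=> S /inC_hit /(_ _ (pathP2 U hU)) [j jU jS].
    move: jU; rewrite mem_enum inE => /eqP uj; rewrite -uj; exact: sum_ge_mem u0 jS.
  apply/le_anti; rewrite (ub_le_sup (ex_intro _ 1 hub) E1) andbT.
  by apply: ge_sup => //; exists 1.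
- pose g (r : seq 'I_m) := odflt j0 [pick j in r | u j != 1].
  have gr : forall r, r \in paths R I ord0 -> (g r \in r) && (u (g r) != 1).
    move=> r /paths2 [P hP ->]; rewrite /g; case: pickP => [j /andP[jr uj] | none] /=.
      by rewrite jr uj.
    have /fintype.subsetPn [j jP jU] : ~~ (P \subset U).
      apply/negP => /subset_leq_card h1; move: hU => /negbT; rewrite -ltnNge => h2.
      by have := leq_ltn_trans (leq_trans hP h1) h2; rewrite ltnn.
    by have := none j; rewrite mem_enum jP /=; move: jU; rewrite inE => ->.
  have ub0 : ubound E 0.
    move=> _ [y [_ Hy] <-]; rewrite mul1r.
    have gr' : forall r, r \in paths R I ord0 -> g r \in r by move=> r /gr /andP[].
    move: (Hy _ (inC_mk _ gr')) => h; apply: (le_trans h).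
    rewrite big1 // => j /mem_bigcupS [r rp]; rewrite inE => /eqP ->.
    by move: (gr r rp) => /andP[_]; case: (bu (g r)) => -> //; rewrite eqxx.
  have E0 : E 0.
    exists 0; last by rewrite mul1r.
    split; first by rewrite lexx ler01.
    by move=> S _; apply: sumr_ge0 => i _; exact: u0.
  apply/le_anti; rewrite (ub_le_sup (ex_intro _ 0 ub0) E0) andbT.
  by apply: ge_sup => //; exists 0.
Qed.

Lemma cardC (A : {set 'I_m}) : (#|A| + #|~: A| = s + s)%N.
Proof. by rewrite cardsC card_ord. Qed.

Lemma vv_bin : vv u = if (s <= #|U|)%N then 1 else 0.
Proof.
have sumU : \sum_j u j = #|U|%:R.
  by rewrite (eq_bigr _ (fun j _ => ueq j)) -big_mkcond /= sumr_const.
rewrite /vv; case: ifP => hU.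
- have h1 : 1 <= \sum_j u j * (s%:R)^-1.
    by rewrite -mulr_suml sumU ler_pdivlMr ?sgt0 // mul1r ler_nat.
  have hb : \big[Order.min/1]_(T : {set 'I_m} | (s < #|T|)%N) \sum_(j in T) u j = 1.
    apply/le_anti; rewrite bigmin_le_id /=; apply: le_bigmin => // T hT.
    have /fintype.subsetPn [j jT jU] : ~~ (T \subset ~: U).
      apply/negP => /subset_leq_card h; have e := cardC U.
      by have := leq_trans (leq_add hU hT) (leq_trans (leq_add (leqnn _) h) (eq_leq e)); rewrite addnS ltnn.
    rewrite finset.in_setC negbK in jU.
    by have := sum_ge_mem u T j u0 jT; rewrite ueq jU.
  by rewrite hb; apply/le_anti; rewrite ge_min lexx orbT le_min h1 lexx.
- have h0 : 0 <= \sum_j u j * (s%:R)^-1.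
    by apply: sumr_ge0 => j _; rewrite mulr_ge0 ?u0 // invr_ge0 ltW ?sgt0.
  have hb : \big[Order.min/1]_(T : {set 'I_m} | (s < #|T|)%N) \sum_(j in T) u j = 0.
    apply/le_anti; apply/andP; split.
      apply: (bigmin_inf (~: U)); first by rewrite -(ltn_add2l #|U|) cardC ltn_add2r ltnNge hU.
      by rewrite big1 // => j; rewrite finset.in_setC ueq => /negbTE ->.
    by apply: le_bigmin => // T _; apply: sumr_ge0 => i _; exact: u0.
  by rewrite hb; apply/le_anti; rewrite ge_min lexx orbT le_min h0 lexx.
Qed.

End Bin.

Lemma vvK (q : 'I_(nQ R I)) : K R I q vv.
Proof.
split.
  move=> x y _ _ t ht.
  have := @cc_min R m (fun y => \sum_j y j * (s%:R)^-1)
    (fun y => \big[Order.min/1]_(T : {set 'I_m} | (s < #|T|)%N) \sum_(j in T) y j)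
    (cc_lin _ _ _) (cc_bigmin _ _ _) x y t ht.
  by rewrite /vv.
by move=> x bx; rewrite (ord1 q) vv_bin // agg_bin.
Qed.

Let xs : 'I_m -> R := fun _ => th.

Lemma K_lb q v : K R I q v -> th <= v xs.
Proof.
move=> [cv hv].
have c1 : cube R I (fun _ => 1) by move=> j; rewrite ler01 lexx.
have c0 : cube R I (fun _ => 0) by move=> j; rewrite ler01 lexx.
have b1 : binary R I (fun _ => 1) by move=> j; right.
have b0 : binary R I (fun _ => 0) by move=> j; left.
have := cv _ _ c1 c0 th; rewrite th02 th12 => /(_ isT).
rewrite (hv _ b1) (hv _ b0) (ord1 q) !agg_bin //.
have -> : [set j : 'I_m | (fun _ => (1 : R)) j == 1] = [set: 'I_m]%SET by apply/setP => j; rewrite !inE eqxx.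
have -> : [set j : 'I_m | (fun _ => (0 : R)) j == 1] = finset.set0.
  by apply/setP => j; rewrite !inE eq_sym oner_eq0.
rewrite cardsT card_ord cards0 leq_addr (leqNgt s 0) (ltnW hs) /=.
by rewrite mulr1 mulr0 addr0.
Qed.

Lemma tight_le : v_tight R I ord0 xs <= (s%:R)^-1.
Proof.
rewrite /v_tight.
have hlb : has_lbound [set v xs | v in K R I ord0] by exists th => _ [v Kv <-]; exact: K_lb Kv.
apply: le_trans (ge_inf hlb (ex_intro2 _ _ vv (vvK ord0) erefl)) _.
rewrite /vv ge_min; apply/orP; left.
have -> : \sum_j xs j * (s%:R)^-1 = \sum_(j in [set: 'I_m]%SET) th * (s%:R)^-1.
  by apply: eq_bigl => j; rewrite inE.
rewrite sumr_const cardsT card_ord -[_ *+ m]mulr_natl mulrA /th mulfV ?mul1r //.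
by rewrite gt_eqF // mgt02.
Qed.

Lemma tight_ge : th <= v_tight R I ord0 xs.
Proof.
apply: lb_le_inf; first by exists (vv xs), vv => //; exact: vvK.
by move=> _ [v Kv <-]; exact: K_lb Kv.
Qed.

Lemma agg_xs : (s.+1)%:R * th <= v_agg R I ord0 xs.
Proof.
rewrite /v_agg; set E := (X in _ <= sup X).
have hub : ubound E 1 by move=> _ [y [/andP[_ y1] _] <-]; rewrite mul1r.
rewrite -[X in X <= _]mul1r; apply: (ub_le_sup (ex_intro _ 1 hub)).
exists ((s.+1)%:R * th) => //; split.
  rewrite mulr_ge0 ?th02 //=.
  by rewrite ler_pdivrMr ?mgt02 // mul1r ler_nat /m; lia.
move=> S hS; rewrite sumr_const -[th *+ _]mulr_natl; apply: (ler_wpM2r th02); rewrite ler_nat.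
rewrite leqNgt; apply/negP; rewrite ltnS => hc.
have hC : (s <= #|~: S|)%N by rewrite -(leq_add2l #|S|) cardC leq_add2r.
have [j jC jS] := inC_hit S hS _ (pathP2 _ hC).
by move: jC; rewrite mem_enum finset.in_setC jS.
Qed.

End Part2.


Theorem proposition4 (R : realType) :
  (forall gamma : R, 1 < gamma ->
     exists I : instance R, deviation_instance R I /\
       exists m_agg m_disagg : R,
         [/\ is_max (obj R I (v_agg R I)) m_agg,
             is_max (obj R I (v_disagg R I)) m_disagg,
             0 < m_agg &
             gamma * m_agg <= m_disagg]) /\
  (forall gamma : R, 1 < gamma ->
     exists I : instance R, deviation_instance R I /\
       exists m_tight m_agg : R,
         [/\ is_max (obj R I (v_tight R I)) m_tight,
             is_max (obj R I (v_agg R I)) m_agg,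
             0 < m_tight &
             gamma * m_tight <= m_agg]).
Proof.
split => gamma g1.
- have g0 : 0 <= 2 * gamma by apply: mulr_ge0 => //; apply: ltW; apply: lt_trans g1.
  have hb := archi_boundP g0.
  set N := Num.Def.archi_bound _ in hb.
  have hm : (2 < N.+3)%N by [].
  eexists; split; first exact: (dev1 R _ hm).
  set I := mkI _ _ _ _.
  have e : forall F : 'I_(nQ R I) -> R, \sum_q F q = F ord0 := fun F => big_ord1 _ F.
  exists (\sum_q v_agg R I q (fun _ => (N.+3%:R)^-1)).
  exists (\sum_q v_disagg R I q (fun _ => (N.+3%:R)^-1)).
  split.
  + exact: (@is_max_const R _ _ _ (th0 R _ hm) (th1 R _ hm) (v_agg R _)).
  + exact: (@is_max_const R _ _ _ (th0 R _ hm) (th1 R _ hm) (v_disagg R _)).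
  + rewrite (e (fun q => v_agg R I q _)); apply: lt_le_trans (agg1_ge R _ hm); by rewrite invr_gt0 (mgt0 R _ hm).
  + rewrite (e (fun q => v_agg R I q _)) (e (fun q => v_disagg R I q _)); apply: le_trans (disagg1_ge R _ hm).
    apply: le_trans (ler_wpM2l (ltW (lt_trans ltr01 g1)) (agg1_le R _ hm)) _.
    rewrite mulrA ler_pdivrMr ?(mgt0 R _ hm) // mul1r.
    rewrite mulrC; apply: ltW; apply: (lt_le_trans hb); rewrite ler_nat; lia.
- have g0 : 0 <= 2 * gamma by apply: mulr_ge0 => //; apply: ltW; apply: lt_trans g1.
  have hb := archi_boundP g0.
  set N := Num.Def.archi_bound _ in hb.
  have hs : (1 < N.+2)%N by [].
  eexists; split; first exact: (dev2 R _ hs).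
  set I := mkI _ _ _ _.
  have e : forall F : 'I_(nQ R I) -> R, \sum_q F q = F ord0 := fun F => big_ord1 _ F.
  exists (\sum_q v_tight R I q (fun _ => ((N.+2 + N.+2)%:R)^-1)).
  exists (\sum_q v_agg R I q (fun _ => ((N.+2 + N.+2)%:R)^-1)).
  split.
  + exact: (@is_max_const R _ _ _ (th02 R _ hs) (th12 R _ hs) (v_tight R _)).
  + exact: (@is_max_const R _ _ _ (th02 R _ hs) (th12 R _ hs) (v_agg R _)).
  + rewrite (e (fun q => v_tight R I q _)); apply: lt_le_trans (tight_ge R _ hs); by rewrite invr_gt0 (mgt02 R _ hs).
  + rewrite (e (fun q => v_agg R I q _)) (e (fun q => v_tight R I q _)); apply: le_trans (agg_xs R _ hs).
    apply: le_trans (ler_wpM2l (ltW (lt_trans ltr01 g1)) (tight_le R _ hs)) _.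
    have a0 := sgt0 R _ hs.
    have -> : ((N.+2 + N.+2)%:R : R) = 2 * N.+2%:R by rewrite natrD mulr_natl mulr2n.
    rewrite invfM mulrA; apply: ler_wpM2r; first by rewrite invr_ge0 ltW.
    have -> : (N.+3%:R : R) = N%:R + 3 by rewrite -addn3 natrD.
    lra.
Qed.
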